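(* Let $X$, $(Y,d_Y)$, $(Z,d_Z)$ be Polish (metric) spaces, $M$ a set, and $P: X \rightsquigarrow Y$, $Q: Y \rightsquigarrow Z$ tight Feller kernels. For $\mu \in \mathcal{P}(Y)$ write $\mu Q = \int Q(y,\cdot)\,d\mu(y)$, and assume $W_1(\mu Q, \nu Q) \le L\, W_1(\mu,\nu)$ for all $\mu,\nu \in \mathcal{P}(Y)$. Then for any $\delta, \epsilon \ge 0$ and any relation $R \subseteq X \times M$, $$Q_{!W}^\epsilon(P_{!W}^\delta R) \subseteq (Q \circ P)_{!W}^{L\delta+\epsilon} R.$$
   Context: $W_1(\mu,\nu) = \inf_{\pi \in \Pi(\mu,\nu)} \int d(y,y')\,d\pi(y,y')$ (possibly $+\infty$). Composite kernel: $(Q \circ P)(x) = P(x)Q$, i.e. $(Q\circ P)(x,C) = \int Q(y,C)\,P(x,dy)$. Wasserstein pushforward of a relation: $P_{!W}^\delta R = \{(\nu,m) \in \mathcal{P}(Y) \times M : \exists x,\ (x,m) \in R,\ W_1(P(x),\nu) \le \delta\}$. For a set $\mathcal{M} \subseteq \mathcal{P}(Y) \times M$, $Q_{!W}^\epsilon \mathcal{M} = \{(\gamma,m) \in \mathcal{P}(Z) \times M : \exists \nu,\ (\nu,m) \in \mathcal{M},\ W_1(\nu Q, \gamma) \le \epsilon\}$; for $R \subseteq X \times M$, $(Q\circ P)_{!W}^\eta R = \{(\gamma,m) : \exists x,\ (x,m) \in R,\ W_1((Q\circ P)(x), \gamma) \le \eta\}$. *)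

(* Defs.v *)
From HB Require Import structures.
From mathcomp Require Import all_boot all_order all_algebra.
From mathcomp Require Import all_classical all_reals all_analysis.
Set Implicit Arguments. Unset Strict Implicit. Unset Printing Implicit Defensive.
Import Order.TTheory GRing.Theory Num.Theory.
Import numFieldNormedType.Exports.
Local Open Scope classical_set_scope.
Local Open Scope ring_scope.
Local Open Scope ereal_scope.

Definition borel (T : ptopologicalType) := g_sigma_algebraType (@open T).

Section Defs.
Variable R : realType.

Definition polish (T : completePseudoMetricType R) : Prop :=
  hausdorff_space T /\ exists D : set T, countable D /\ closure D = setT.

Definition compatible_metric (T : pseudoMetricType R) (d : T -> T -> R) : Prop :=
  [/\ forall x y, (0 <= d x y)%R,
      forall x y, d x y = 0%R <-> x = y,
      forall x y, d x y = d y x,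
      forall x y z, (d x z <= d x y + d y z)%R &
      forall x (e : R), (0 < e)%R -> ball x e = [set y | (d x y < e)%R]].

Definition is_coupling (T : completePseudoMetricType R)
  (mu nu : set (borel T) -> \bar R) (pi : probability (borel T * borel T)%type R) :=
  forall A : set (borel T), measurable A ->
    pi (A `*` setT) = mu A /\ pi (setT `*` A) = nu A.

(* 1-Wasserstein distance (possibly +oo; inf of the empty set is +oo) *)
Definition W1 (T : completePseudoMetricType R) (d : T -> T -> R)
  (mu nu : set (borel T) -> \bar R) : \bar R :=
  ereal_inf [set (\int[pi]_z (d z.1 z.2)%:E) | pi in is_coupling mu nu].

(* mu Q = \int Q(y, .) dmu(y) ; also (Q o P)(x) = mpush (P x) Q *)
Definition mpush (Y Z : ptopologicalType) (mu : set (borel Y) -> \bar R)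
  (Q : R.-pker (borel Y) ~> (borel Z)) : set (borel Z) -> \bar R :=
  fun C => \int[mu]_y Q y C.

Definition feller (X Y : ptopologicalType) (P : R.-pker (borel X) ~> (borel Y)) :=
  forall f : Y -> R, continuous f -> (exists M : R, forall y, (`|f y| <= M)%R) ->
    continuous (fun x : X => fine (\int[P x]_y (f y)%:E)).

Definition tight_kernel (X Y : ptopologicalType) (P : R.-pker (borel X) ~> (borel Y)) :=
  forall K : set X, compact K -> forall e : R, (0 < e)%R ->
    exists C : set Y, compact C /\ forall x, K x -> ((1 - e)%:E <= P x C).

Definition pushW_rel (X : ptopologicalType) (Y : completePseudoMetricType R) (M : Type)
  (dY : Y -> Y -> R) (P : R.-pker (borel X) ~> (borel Y)) (delta : R)
  (Rel : set (X * M)) : set (probability (borel Y) R * M) :=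
  [set p : probability (borel Y) R * M | exists x, Rel (x, p.2) /\ W1 dY (P x) p.1 <= delta%:E].

Definition pushW_set (Y Z : completePseudoMetricType R) (M : Type)
  (dZ : Z -> Z -> R) (Q : R.-pker (borel Y) ~> (borel Z)) (eps : R)
  (Ms : set (probability (borel Y) R * M)) : set (probability (borel Z) R * M) :=
  [set p : probability (borel Z) R * M | exists nu : probability (borel Y) R,
     Ms (nu, p.2) /\ W1 dZ (mpush nu Q) p.1 <= eps%:E].

Definition pushW_comp (X Y : ptopologicalType) (Z : completePseudoMetricType R) (M : Type)
  (dZ : Z -> Z -> R) (P : R.-pker (borel X) ~> (borel Y))
  (Q : R.-pker (borel Y) ~> (borel Z)) (eta : R)
  (Rel : set (X * M)) : set (probability (borel Z) R * M) :=
  [set p : probability (borel Z) R * M | exists x, Rel (x, p.2) /\ W1 dZ (mpush (P x) Q) p.1 <= eta%:E].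

End Defs.

(* Main.v *)
Require Import Defs.
From HB Require Import structures.
From mathcomp Require Import all_boot all_order all_algebra.
From mathcomp Require Import all_classical all_reals all_analysis.
From mathcomp Require Import measurable_realfun.
From mathcomp Require Import lra.
Import Order.TTheory GRing.Theory Num.Theory.
Import numFieldNormedType.Exports.
Local Open Scope classical_set_scope.
Local Open Scope ring_scope.
Section mkprob.
Context d (T : measurableType d) (R : realType) (m : {measure set T -> \bar R}) (h : m setT = 1%E).
Definition mkprob (_ : m setT = 1%E) : set T -> \bar R := m.
HB.instance Definition _ := Measure.on (mkprob h).
HB.instance Definition _ := Measure_isProbability.Build _ _ _ (mkprob h) h.
End mkprob.
Arguments mkprob {d T R m} h.

Section marg.
Context d1 d2 (T1 : measurableType d1) (T2 : measurableType d2) (R : realType).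
Variable (m : {finite_measure set (T1 * T2)%type -> \bar R}).

Definition mfst {B : set T2} (mB : measurable B) : set T1 -> \bar R :=
  fun A => m (A `*` B).
Definition msnd {B : set T1} (mB : measurable B) : set T2 -> \bar R :=
  fun C => m (B `*` C).

Section mfst.
Variables (B : set T2) (mB : measurable B).
Let mf0 : mfst mB set0 = 0%E.
Proof. by rewrite /mfst set0X measure0. Qed.
Let mf_ge0 A : (0 <= mfst mB A)%E.
Proof. exact: measure_ge0. Qed.
Let mf_sa : semi_sigma_additive (mfst mB).
Proof.
move=> F mF tF mUF; rewrite /mfst setX_bigcupl.
apply: measure_semi_sigma_additive.
- by move=> n; apply: measurableX.
- apply/trivIsetP => i j _ _ ij; rewrite -setXI setIid.
  by move/trivIsetP : tF => /(_ i j Logic.I Logic.I ij) ->; rewrite set0X.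
- by rewrite -setX_bigcupl; apply: measurableX.
Qed.
HB.instance Definition _ := isMeasure.Build _ _ _ (mfst mB) mf0 mf_ge0 mf_sa.
Let mf_fin : fin_num_fun (mfst mB).
Proof. by move=> A mA; apply: fin_num_measure; apply: measurableX. Qed.
HB.instance Definition _ := @Measure_isFinite.Build _ T1 _ (mfst mB) mf_fin.
End mfst.

Section msnd.
Variables (B : set T1) (mB : measurable B).
Let mf0 : msnd mB set0 = 0%E.
Proof. by rewrite /msnd setX0 measure0. Qed.
Let mf_ge0 A : (0 <= msnd mB A)%E.
Proof. exact: measure_ge0. Qed.
Let mf_sa : semi_sigma_additive (msnd mB).
Proof.
move=> F mF tF mUF; rewrite /msnd setX_bigcupr.
apply: measure_semi_sigma_additive.
- by move=> n; apply: measurableX.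
- apply/trivIsetP => i j _ _ ij; rewrite -setXI setIid.
  by move/trivIsetP : tF => /(_ i j Logic.I Logic.I ij) ->; rewrite setX0.
- by rewrite -setX_bigcupr; apply: measurableX.
Qed.
HB.instance Definition _ := isMeasure.Build _ _ _ (msnd mB) mf0 mf_ge0 mf_sa.
Let mf_fin : fin_num_fun (msnd mB).
Proof. by move=> A mA; apply: fin_num_measure; apply: measurableX. Qed.
HB.instance Definition _ := @Measure_isFinite.Build _ T2 _ (msnd mB) mf_fin.
End msnd.
End marg.
Arguments mfst {d1 d2 T1 T2 R} m {B} mB.
Arguments msnd {d1 d2 T1 T2 R} m {B} mB.
Section restr_integral.
Local Open Scope ereal_scope.
Context d (T : measurableType d) (R : realType).
Lemma integral_mrestr_ge0 (m : {measure set T -> \bar R}) (S : set T) (mS : measurable S)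
  (f : T -> \bar R) : measurable_fun setT f -> (forall x, 0 <= f x) ->
  \int[mrestr m mS]_x f x = \int[m]_(x in S) f x.
Proof.
move=> mf f0.
have -> : \int[mrestr m mS]_x f x = \int[mrestr m mS]_(x in S `|` ~` S) f x.
  by rewrite setUv.
rewrite ge0_integral_setU //; last 2 first.
- by rewrite setUv.
- by apply/disj_set2P; rewrite setICr.
rewrite [X in _ + X]null_set_integral ?adde0 //; last first.
all: try exact: measurableC.
all: try exact: (measurable_funS measurableT _ mf).
  by rewrite -[LHS]/(m (~` S `&` S)) setICl measure0.
apply: eq_measure_integral => A mA AS.
by rewrite -[LHS]/(m (A `&` S)) setIidl.
Qed.
End restr_integral.

Section marg_integral.
Local Open Scope ereal_scope.
Context d1 d2 (T1 : measurableType d1) (T2 : measurableType d2) (R : realType).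
Variable (m : {finite_measure set (T1 * T2)%type -> \bar R}).

Lemma integral_mfst (B : set T2) (mB : measurable B) (g : T1 -> \bar R) :
  measurable_fun setT g -> (forall x, 0 <= g x) ->
  \int[mfst m mB]_x g x = \int[m]_(z in setT `*` B) g z.1.
Proof.
move=> mg g0.
have mTB : measurable ([set: T1] `*` B) by apply: measurableX.
transitivity (\int[pushforward (mrestr m mTB) fst]_x g x).
  apply: eq_measure_integral => A mA _.
  rewrite /pushforward /mrestr /mfst; congr (m _).
  by apply/seteqP; split => -[x y] /=; rewrite /preimage /setX /=; tauto.
rewrite (ge0_integral_pushforward measurable_fst (mrestr m mTB)) //.
rewrite preimage_setT integral_mrestr_ge0 //.
exact: measurableT_comp.
by move=> x; exact: g0.
Qed.

Lemma integral_msnd (B : set T1) (mB : measurable B) (g : T2 -> \bar R) :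
  measurable_fun setT g -> (forall x, 0 <= g x) ->
  \int[msnd m mB]_x g x = \int[m]_(z in B `*` setT) g z.2.
Proof.
move=> mg g0.
have mBT : measurable (B `*` [set: T2]) by apply: measurableX.
transitivity (\int[pushforward (mrestr m mBT) snd]_x g x).
  apply: eq_measure_integral => A mA _.
  rewrite /pushforward /mrestr /msnd; congr (m _).
  by apply/seteqP; split => -[x y] /=; rewrite /preimage /setX /=; tauto.
rewrite (ge0_integral_pushforward measurable_snd (mrestr m mBT)) //.
rewrite preimage_setT integral_mrestr_ge0 //.
exact: measurableT_comp.
by move=> x; exact: g0.
Qed.
End marg_integral.
Section metric.
Context (R : realType) (T : completePseudoMetricType R) (d : T -> T -> R)
  (hd : compatible_metric d).

Lemma cm_ge0 x y : 0 <= d x y. Proof. by case: hd. Qed.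
Lemma cm_sym x y : d x y = d y x. Proof. by case: hd. Qed.
Lemma cm_tri x y z : d x z <= d x y + d y z. Proof. by case: hd. Qed.
Lemma cm_ball x e : 0 < e -> ball x e = [set y | d x y < e].
Proof. by case: hd => _ _ _ _; apply. Qed.

Lemma cm_cont q : continuous (fun x => d x q).
Proof.
move=> x; apply/cvgrPdist_lt => e e0.
apply/nbhs_ballP; exists e => // y; rewrite cm_ball //= => dxy.
have h1 := cm_tri x y q; have h2 := cm_tri y x q; rewrite (cm_sym y x) in h2.
rewrite ltr_norml; apply/andP; split; lra.
Qed.

Lemma cm_measurable q : measurable_fun setT (fun x : borel T => d x q).
Proof.
apply: (measurability _ (RGenOpens.measurableE R)).
move=> _ [_ [a [b ->] <-]]; rewrite setTI.
apply: sub_sigma_algebra.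
have /continuousP := @cm_cont q; apply.
exact: interval_open.
Qed.
End metric.
Arguments cm_ge0 {R T d} hd.
Arguments cm_sym {R T d} hd.
Arguments cm_tri {R T d} hd.
Arguments cm_ball {R T d} hd.
Arguments cm_cont {R T d} hd.
Arguments cm_measurable {R T d} hd.
Section metric2.
Context (R : realType) (T : completePseudoMetricType R) (d : T -> T -> R)
  (hd : compatible_metric d).

Lemma cm_dense_seq (hsep : exists D : set T, countable D /\ closure D = setT) (x0 : T) :
  exists q : nat -> T, forall y e, 0 < e -> exists n, d (q n) y < e.
Proof.
case: hsep => D [/countable_injP [f finj] cD].
pose q n := match pselect (exists x, D x /\ f x = n) with
  | left h => projT1 (cid h) | right _ => x0 end.
exists q => y e e0.
have yD : closure D y by rewrite cD.
have nb : nbhs y (ball y e) by apply: nbhsx_ballx.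
have [x [Dx]] := yD _ nb.
rewrite (cm_ball hd) //= => dyx.
exists (f x); rewrite /q; case: pselect => [h|]; last by move=> /(_ (ex_intro _ x (conj Dx erefl))).
case: (cid h) => x' [Dx' fx'] /=.
have -> : x' = x by apply: finj => //; rewrite inE.
by rewrite (cm_sym hd).
Qed.

Lemma cm_measurable2 (q : nat -> T) (hq : forall y e, 0 < e -> exists n, d (q n) y < e) :
  measurable_fun setT (fun z : (borel T * borel T)%type => (d z.1 z.2)%:E).
Proof.
have -> : (fun z : (borel T * borel T)%type => (d z.1 z.2)%:E) =
  (fun z => einfs (fun n => (d z.1 (q n) + d (q n) z.2)%:E) 0).
  apply/funext => -[x y] /=; apply/esym/le_anti/andP; split.
  - apply/lee_addgt0Pr => e e0.
    have [n hn] := hq y (e / 2) ltac:(by rewrite divr_gt0).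
    apply: ge_ereal_inf; exists ((d x (q n) + d (q n) y)%:E); first by exists n.
    rewrite lee_fin; have := cm_tri hd x y (q n); rewrite (cm_sym hd y (q n)).
    lra.
  - apply/ereal_infP => _ [n _ <-]; rewrite lee_fin; exact: cm_tri.
apply: measurable_fun_einfs => n.
apply/measurable_EFinP; apply: measurable_funD.
- exact: (measurableT_comp (cm_measurable hd (q n)) measurable_fst).
- under eq_fun do rewrite (cm_sym hd).
  exact: (measurableT_comp (cm_measurable hd (q n)) measurable_snd).
Qed.
End metric2.
Arguments cm_dense_seq {R T d} hd.
Arguments cm_measurable2 {R T d} hd {q}.
Lemma int_cst_prob d (X : measurableType d) (R : realType) (P : probability X R) (c : R) :
  (\int[P]_z (c%:E) = c%:E)%E.
Proof. by rewrite integral_cst //= probability_setT mule1. Qed.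

Section prod_int.
Local Open Scope ereal_scope.
Context d1 d2 (T1 : measurableType d1) (T2 : measurableType d2) (R : realType).
Variables (m1 : {sigma_finite_measure set T1 -> \bar R})
          (m2 : {sigma_finite_measure set T2 -> \bar R}).

Lemma int_prod_fst (f : T1 -> \bar R) : measurable_fun setT f -> (forall x, 0 <= f x) ->
  \int[m1 \x m2]_z f z.1 = \int[m1]_x f x * m2 setT.
Proof.
move=> mf f0.
rewrite (fubini_tonelli1 (fun z => f z.1)) //; last first.
  exact: (measurableT_comp mf measurable_fst).
rewrite /fubini_F -ge0_integralZr //.
apply: eq_integral => x _.
exact: (integral_cst m2 measurableT (f x)).
Qed.

Lemma int_prod_snd (f : T2 -> \bar R) : measurable_fun setT f -> (forall x, 0 <= f x) ->
  \int[m1 \x m2]_z f z.2 = \int[m2]_x f x * m1 setT.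
Proof.
move=> mf f0.
rewrite (fubini_tonelli2 (fun z => f z.2)) //; last first.
  exact: (measurableT_comp mf measurable_snd).
rewrite /fubini_G -ge0_integralZr //.
apply: eq_integral => x _.
exact: (integral_cst m1 measurableT (f x)).
Qed.
End prod_int.

Section glue.
Context (R : realType) (T : completePseudoMetricType R) (d : T -> T -> R)
  (hd : compatible_metric d).
Variables (q : nat -> T) (hq : forall y e, 0 < e -> exists n, d (q n) y < e).
Variables (r : R) (r0 : 0 < r).
Variables (p1 p2 : probability (borel T * borel T)%type R).
Hypothesis hm : forall B : set (borel T), measurable B ->
  p1 (setT `*` B) = p2 (B `*` setT).

Definition gBall n : set (borel T) := [set y | d (q n) y < r].
Definition gB := seqDU gBall.

Lemma gBall_meas n : measurable (gBall n).
Proof.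
have := cm_measurable hd (q n) measurableT _ (measurable_itv `]-oo, r[).
rewrite setTI; congr measurable.
apply/seteqP; split => y /=; rewrite /gBall /= in_itv /= (cm_sym hd) //.
Qed.

Lemma gB_meas n : measurable (gB n).
Proof.
apply: measurableD; first exact: gBall_meas.
by apply: bigsetU_measurable => i _; exact: gBall_meas.
Qed.

Lemma gB_triv : trivIset setT gB.
Proof. exact: trivIset_seqDU. Qed.

Lemma gB_cover : \bigcup_n gB n = setT.
Proof.
rewrite /gB -seqDU_bigcup_eq; apply/seteqP; split => // y _.
have [n hn] := hq y r r0; by exists n.
Qed.

Lemma gB_sub n y : gB n y -> d (q n) y < r.
Proof. by case. Qed.

Definition gbeta n : R := fine (p1 (setT `*` gB n)).
Lemma gbeta_ge0 n : 0 <= gbeta n.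
Proof. exact/fine_ge0/measure_ge0. Qed.
Lemma gbetaE n : ((gbeta n)%:E = p1 (setT `*` gB n))%E.
Proof. by rewrite fineK // fin_num_measure //; apply: measurableX => //; exact: gB_meas. Qed.
Lemma ginv_ge0 n : 0 <= (gbeta n)^-1.
Proof. by rewrite invr_ge0 gbeta_ge0. Qed.

Definition galpha n := mfst p1 (gB_meas n).
Definition grho n := mscale (NngNum (ginv_ge0 n)) (msnd p2 (gB_meas n)).
Definition gamma0 := mseries (fun n => galpha n \x grho n)%E 0.

Lemma galpha_setT n : galpha n setT = (gbeta n)%:E.
Proof. by rewrite gbetaE. Qed.

Lemma grho_setT n : grho n setT = (if gbeta n == 0%R then 0 else 1)%E.
Proof.
rewrite /grho /mscale /= /msnd -(hm _ (gB_meas n)) -gbetaE -EFinM.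
have [->|b0] := eqVneq (gbeta n) 0; first by rewrite invr0 mul0r.
by rewrite mulVf.
Qed.

Lemma grect n A C : measurable A -> measurable C ->
  ((galpha n \x grho n) (A `*` C) =
   p1 (A `*` gB n) * (((gbeta n)^-1)%:E * p2 (gB n `*` C)))%E.
Proof. by move=> mA mC; rewrite product_measure1E. Qed.

Lemma gamma0_fst A : measurable A -> gamma0 (A `*` setT) = p1 (A `*` setT).
Proof.
move=> mA; rewrite /gamma0 /mseries.
transitivity (\sum_(0 <= k <oo) p1 (A `*` gB k))%E.
  apply: eq_eseriesr => n _.
  transitivity (p1 (A `*` gB n) * (((gbeta n)^-1)%:E * p2 (gB n `*` setT)))%E.
    exact: grect.
  rewrite -(hm _ (gB_meas n)) -gbetaE -EFinM.
  have [b0|b0] := eqVneq (gbeta n) 0; last by rewrite mulVf // mule1.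
  rewrite b0 invr0 mul0r mule0.
  apply/esym/eqP; rewrite eq_le measure_ge0 andbT.
  have <- : (gbeta n)%:E = 0%E by rewrite b0.
  rewrite gbetaE.
  apply: le_measure; try (by apply/mem_set; apply: measurableX => //; exact: gB_meas).
  by move=> [x y] [_ ?].
rewrite -gB_cover setX_bigcupr; apply: cvg_lim => //.
apply: measure_sigma_additive.
  by move=> n; apply: measurableX => //; exact: gB_meas.
apply/trivIsetP => i j _ _ ij; rewrite -setXI setIid.
by move/trivIsetP : gB_triv => /(_ i j Logic.I Logic.I ij) ->; rewrite setX0.
Qed.

Lemma gamma0_snd C : measurable C -> gamma0 (setT `*` C) = p2 (setT `*` C).
Proof.
move=> mC; rewrite /gamma0 /mseries.
transitivity (\sum_(0 <= k <oo) p2 (gB k `*` C))%E.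
  apply: eq_eseriesr => n _.
  transitivity (p1 (setT `*` gB n) * (((gbeta n)^-1)%:E * p2 (gB n `*` C)))%E.
    exact: grect.
  rewrite -gbetaE muleA -EFinM.
  have [b0|b0] := eqVneq (gbeta n) 0; last by rewrite mulfV // mul1e.
  rewrite b0 invr0 mul0r mul0e.
  apply/esym/eqP; rewrite eq_le measure_ge0 andbT.
  have <- : (gbeta n)%:E = 0%E by rewrite b0.
  rewrite gbetaE (hm _ (gB_meas n)).
  apply: le_measure; try (by apply/mem_set; apply: measurableX => //; exact: gB_meas).
  by move=> [x y] [? _].
rewrite -gB_cover setX_bigcupl; apply: cvg_lim => //.
apply: measure_sigma_additive.
  by move=> n; apply: measurableX => //; exact: gB_meas.
apply/trivIsetP => i j _ _ ij; rewrite -setXI setIid.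
by move/trivIsetP : gB_triv => /(_ i j Logic.I Logic.I ij) ->; rewrite set0X.
Qed.

Lemma gamma0_setT : gamma0 setT = 1%E.
Proof. by rewrite -setXTT gamma0_snd // setXTT probability_setT. Qed.

Definition gamma := mkprob gamma0_setT.

Lemma f1_meas n : measurable_fun setT (fun x : borel T => (d x (q n))%:E).
Proof. by apply/measurable_EFinP; exact: (cm_measurable hd). Qed.
Lemma f2_meas n : measurable_fun setT (fun x : borel T => (d (q n) x)%:E).
Proof. under eq_fun do rewrite (cm_sym hd). by apply/measurable_EFinP; exact: (cm_measurable hd). Qed.

Section cost.
Local Open Scope ereal_scope.
Hypothesis mD : measurable_fun setT (fun z : (borel T * borel T)%type => (d z.1 z.2)%:E).

Lemma mDr : measurable_fun setT (fun z : (borel T * borel T)%type => (d z.1 z.2)%:E + r%:E).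
Proof. by apply: emeasurable_funD => //; exact: measurable_cst. Qed.

Lemma gcost_n n : \int[galpha n \x grho n]_z (d z.1 z.2)%:E <=
  \int[p1]_(z in setT `*` gB n) ((d z.1 z.2)%:E + r%:E) +
  \int[p2]_(z in gB n `*` setT) ((d z.1 z.2)%:E + r%:E).
Proof.
have m1 : measurable_fun setT (fun z : (borel T * borel T)%type => (d z.1 (q n))%:E).
  exact: (measurableT_comp (f1_meas n) measurable_fst).
have m2 : measurable_fun setT (fun z : (borel T * borel T)%type => (d (q n) z.2)%:E).
  exact: (measurableT_comp (f2_meas n) measurable_snd).
apply: (@le_trans _ _ (\int[galpha n \x grho n]_z ((d z.1 (q n))%:E + (d (q n) z.2)%:E))).
  apply: ge0_le_integral => //.
  - by move=> z _; rewrite lee_fin; exact: (cm_ge0 hd).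
  - exact: emeasurable_funD.
  - by move=> z _; rewrite -EFinD lee_fin; exact: (cm_tri hd).
rewrite ge0_integralD //; last 2 first.
  - by move=> z _; rewrite lee_fin; exact: (cm_ge0 hd).
  - by move=> z _; rewrite lee_fin; exact: (cm_ge0 hd).
rewrite (@int_prod_fst _ _ _ _ _ (galpha n) (grho n) (fun x => (d x (q n))%:E)) //; last first.
  - by move=> x; rewrite lee_fin; exact: (cm_ge0 hd).
  - exact: f1_meas.
rewrite (@int_prod_snd _ _ _ _ _ (galpha n) (grho n) (fun x => (d (q n) x)%:E)) //; last first.
  - by move=> x; rewrite lee_fin; exact: (cm_ge0 hd).
  - exact: f2_meas.
change (\int[galpha n]_x (d x (q n))%:E * grho n setT + \int[grho n]_x (d (q n) x)%:E * galpha n setT <=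
  \int[p1]_(z in setT `*` gB n) ((d z.1 z.2)%:E + r%:E) + \int[p2]_(z in gB n `*` setT) ((d z.1 z.2)%:E + r%:E)).
rewrite grho_setT galpha_setT /galpha integral_mfst //; last first.
  - by move=> x; rewrite lee_fin; exact: (cm_ge0 hd).
  - exact: f1_meas.
rewrite /grho ge0_integral_mscale //; last first.
  - by move=> x _; rewrite lee_fin; exact: (cm_ge0 hd).
  - exact: f2_meas.
rewrite integral_msnd //; last first.
  - by move=> x; rewrite lee_fin; exact: (cm_ge0 hd).
  - exact: f2_meas.
have mTB : measurable ([set: borel T] `*` gB n) by apply: measurableX => //; exact: gB_meas.
have mBT : measurable (gB n `*` [set: borel T]) by apply: measurableX => //; exact: gB_meas.
apply: leeD.
- have h : \int[p1]_(z in setT `*` gB n) (d z.1 (q n))%:E <=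
           \int[p1]_(z in setT `*` gB n) ((d z.1 z.2)%:E + r%:E).
    apply: ge0_le_integral => //.
    + by move=> z _; rewrite lee_fin; exact: (cm_ge0 hd).
    + exact: (measurable_funS measurableT _ m1).
    + exact: (measurable_funS measurableT _ mDr).
    + move=> [x y] [_ /gB_sub hy] /=; rewrite -EFinD lee_fin.
      have := cm_tri hd x y (q n); rewrite (cm_sym hd y (q n)); lra.
  case: ifPn => _; last by rewrite mule1.
  rewrite mule0; apply: integral_ge0 => z _.
  by rewrite adde_ge0 // lee_fin ?(cm_ge0 hd) ?ltW.
- have h : \int[p2]_(z in gB n `*` setT) (d (q n) z.2)%:E <=
           \int[p2]_(z in gB n `*` setT) ((d z.1 z.2)%:E + r%:E).
    apply: ge0_le_integral => //.
    + by move=> z _; rewrite lee_fin; exact: (cm_ge0 hd).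
    + exact: (measurable_funS measurableT _ m2).
    + exact: (measurable_funS measurableT _ mDr).
    + move=> [x y] [/gB_sub hx _] /=; rewrite -EFinD lee_fin.
      have := cm_tri hd (q n) x y; lra.
  have [b0|b0] := eqVneq (gbeta n) 0%R.
    have -> : (gbeta n)%:E = 0 by rewrite b0.
    rewrite mule0; apply: integral_ge0 => z _.
    by rewrite adde_ge0 // lee_fin ?(cm_ge0 hd) ?ltW.
  by rewrite /= muleC muleA -EFinM mulfV // mul1e.
Qed.

Lemma gamma_cost : \int[gamma]_z (d z.1 z.2)%:E <=
  \int[p1]_z (d z.1 z.2)%:E + \int[p2]_z (d z.1 z.2)%:E + (r + r)%:E.
Proof.
have D0 : forall z : (borel T * borel T)%type, 0 <= (d z.1 z.2)%:E + r%:E.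
  by move=> z; rewrite adde_ge0 // lee_fin ?(cm_ge0 hd) ?ltW.
change (\int[gamma0]_z (d z.1 z.2)%:E <=
  \int[p1]_z (d z.1 z.2)%:E + \int[p2]_z (d z.1 z.2)%:E + (r + r)%:E).
rewrite /gamma0 (ge0_integral_measure_series (fun n => galpha n \x grho n) measurableT) //; last first.
  by move=> z _; rewrite lee_fin; exact: (cm_ge0 hd).
apply: (@le_trans _ _ (\sum_(0 <= n <oo) (\int[p1]_(z in setT `*` gB n) ((d z.1 z.2)%:E + r%:E) +
  \int[p2]_(z in gB n `*` setT) ((d z.1 z.2)%:E + r%:E)))).
  apply: lee_nneseries => n _.
    by move=> _; apply: integral_ge0 => z _; rewrite lee_fin; exact: (cm_ge0 hd).
  exact: gcost_n.
rewrite nneseriesD; last 2 first.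
  - by move=> n _ _; apply: integral_ge0 => z _; exact: D0.
  - by move=> n _ _; apply: integral_ge0 => z _; exact: D0.
have e1 : \sum_(0 <= n <oo) \int[p1]_(z in setT `*` gB n) ((d z.1 z.2)%:E + r%:E) =
    \int[p1]_z ((d z.1 z.2)%:E + r%:E).
  transitivity (\int[p1]_(z in \bigcup_n (setT `*` gB n)) ((d z.1 z.2)%:E + r%:E)).
    rewrite ge0_integral_bigcup //.
    all: try (by move=> n; apply: measurableX => //; exact: gB_meas).
    all: try exact: (measurable_funS measurableT _ mDr).
    all: try (by move=> z _; exact: D0).
    apply/trivIsetP => i j _ _ ij; rewrite -setXI setIid.
    by move/trivIsetP : gB_triv => /(_ i j Logic.I Logic.I ij) ->; rewrite setX0.
  by rewrite -setX_bigcupr gB_cover setXTT.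
have e2 : \sum_(0 <= n <oo) \int[p2]_(z in gB n `*` setT) ((d z.1 z.2)%:E + r%:E) =
    \int[p2]_z ((d z.1 z.2)%:E + r%:E).
  transitivity (\int[p2]_(z in \bigcup_n (gB n `*` setT)) ((d z.1 z.2)%:E + r%:E)).
    rewrite ge0_integral_bigcup //.
    all: try (by move=> n; apply: measurableX => //; exact: gB_meas).
    all: try exact: (measurable_funS measurableT _ mDr).
    all: try (by move=> z _; exact: D0).
    apply/trivIsetP => i j _ _ ij; rewrite -setXI setIid.
    by move/trivIsetP : gB_triv => /(_ i j Logic.I Logic.I ij) ->; rewrite set0X.
  by rewrite -setX_bigcupl gB_cover setXTT.
rewrite e1 e2.
rewrite !ge0_integralD //; last 4 first.
  all: try (by move=> z _; rewrite lee_fin; exact: (cm_ge0 hd)).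
  all: try (by move=> z _; rewrite lee_fin ltW).
  all: try exact: measurable_cst.
rewrite !int_cst_prob EFinD.
by rewrite addeACA.
Qed.
End cost.
End glue.
Arguments gamma {R T d} hd {q} hq {r} r0 {p1 p2} hm.
Arguments gamma0_fst {R T d} hd {q} hq {r} r0 {p1 p2} hm {A}.
Arguments gamma0_snd {R T d} hd {q} hq {r} r0 {p1 p2} hm {C}.
Arguments gamma_cost {R T d} hd {q} hq {r} r0 {p1 p2} hm.
Section triangle.
Local Open Scope ereal_scope.
Context (R : realType) (T : completePseudoMetricType R) (d : T -> T -> R)
  (hd : compatible_metric d) (hP : polish T).

Lemma W1_ge0 (a b : set (borel T) -> \bar R) : 0 <= W1 d a b.
Proof.
apply/ereal_infP => _ [pi _ <-]; apply: integral_ge0 => z _.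
by rewrite lee_fin; exact: (cm_ge0 hd).
Qed.

Lemma W1_triangle (a b c : set (borel T) -> \bar R) :
  W1 d a c <= W1 d a b + W1 d b c.
Proof.
have [x0 _] : exists x0 : T, True by exists point.
case: hP => _ hsep.
have [q hq] := cm_dense_seq hd hsep x0.
have mD := cm_measurable2 hd hq.
have hab := W1_ge0 a b; have hbc := W1_ge0 b c.
case Eab : (W1 d a b) hab => [x| |] // hab; last first.
  by rewrite addye ?leey // gt_eqF // (lt_le_trans _ hbc) // ltNye.
case Ebc : (W1 d b c) hbc => [y| |] // hbc; last by rewrite addey ?leey.
apply/lee_addgt0Pr => e e0.
have e3 : (0 < e / 3)%R by rewrite divr_gt0.
have fab : W1 d a b \is a fin_num by rewrite Eab.
have fbc : W1 d b c \is a fin_num by rewrite Ebc.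
have [c1 [pi1 cp1 <-] hc1] := lb_ereal_inf_adherent e3 fab.
have [c2 [pi2 cp2 <-] hc2] := lb_ereal_inf_adherent e3 fbc.
rewrite -/(W1 d a b) Eab in hc1; rewrite -/(W1 d b c) Ebc in hc2.
have e6 : (0 < e / 6)%R by rewrite divr_gt0.
have hm : forall B : set (borel T), measurable B -> pi1 (setT `*` B) = pi2 (B `*` setT).
  by move=> B mB; rewrite (cp1 B mB).2 (cp2 B mB).1.
pose G := gamma hd hq e6 hm.
have cG : is_coupling a c G.
  move=> A mA; split.
  - transitivity (pi1 (A `*` setT)); first exact: (gamma0_fst hd hq e6 hm mA).
    exact: (cp1 A mA).1.
  - transitivity (pi2 (setT `*` A)); first exact: (gamma0_snd hd hq e6 hm mA).
    exact: (cp2 A mA).2.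
apply: (@le_trans _ _ (\int[G]_z (d z.1 z.2)%:E)).
  by apply: ereal_inf_lbound; exists G.
apply: (le_trans (gamma_cost hd hq e6 hm mD)).
apply: (@le_trans _ _ ((x + e / 3)%:E + (y + e / 3)%:E + (e / 6 + e / 6)%:E)).
  apply: leeD => //; apply: leeD; apply: ltW; by rewrite EFinD.
rewrite -!EFinD lee_fin; lra.
Qed.
End triangle.
Arguments W1_triangle {R T d} hd hP.
Theorem mainTheorem19 (R : realType)
  (X Y Z : completePseudoMetricType R) (M : Type)
  (dY : Y -> Y -> R) (dZ : Z -> Z -> R)
  (hX : polish X) (hY : polish Y) (hZ : polish Z)
  (hdY : compatible_metric dY) (hdZ : compatible_metric dZ)
  (P : R.-pker (borel X) ~> (borel Y)) (Q : R.-pker (borel Y) ~> (borel Z))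
  (hPF : feller P) (hPT : tight_kernel P)
  (hQF : feller Q) (hQT : tight_kernel Q)
  (L : R) (hL0 : 0 <= L)
  (hL : forall mu nu : probability (borel Y) R,
     (W1 dZ (mpush mu Q) (mpush nu Q) <= L%:E * W1 dY mu nu)%E)
  (delta eps : R) (hdelta : 0 <= delta) (heps : 0 <= eps)
  (Rel : set (X * M)) :
  pushW_set dZ Q eps (pushW_rel dY P delta Rel)
    `<=` pushW_comp dZ P Q (L * delta + eps) Rel.
Proof.
move=> [gam m] [nu [[x [Rx hPx]] hQ]] /=.
exists x; split => //=.
have h1 : (W1 dZ (mpush (P x) Q) (mpush nu Q) <= L%:E * W1 dY (P x) nu)%E.
  exact (hL (mkprob (prob_kernel (s:=P) x)) nu).
apply: (le_trans (W1_triangle hdZ hZ _ (mpush nu Q) _)).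
rewrite EFinD; apply: leeD => //.
apply: (le_trans h1); rewrite EFinM.
exact: lee_wpmul2l.
Qed.
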